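(* Let $\mathbf Q$ be a stabilizer group on $n$ qubits with independent generating set $\mathrm{gen}(\mathbf Q)$ of Hermitian Pauli operators, $H_{\mathbf Q}=-\sum_{g\in\mathrm{gen}(\mathbf Q)}g$, and $\Delta_{\mathrm{gap}}:=2$ (twice the minimal coefficient of $H_{\mathbf Q}$). Let $V=-\sum_{P\in\mathbf P(V)}w_P P$ with $\mathbf P(V)$ a set of Hermitian Pauli operators and $w_P>0$, and $H=H_{\mathbf Q}+V$. Let $V_\perp=-\sum_{P\in\mathbf P(V)\setminus C(\mathbf Q)}w_P P$ and assume $V_\perp\neq0$. Assume: (i) there is a state $|\psi'_{\mathbf Q}\rangle\in V_{\mathbf Q}$ with $\langle\psi'_{\mathbf Q}|V_\perp^2|\psi'_{\mathbf Q}\rangle\neq0$; (ii) $\sum_{P\in\mathbf P(V)\setminus\mathbf Q}w_P<\Delta_{\mathrm{gap}}-2\sum_{P\in\mathbf P(V)\cap\mathbf Q}w_P$. For $\lambda\ge0$ let $|\psi'_{\mathbf Q}(\lambda)\rangle=\big(|\psi'_{\mathbf Q}\rangle-\lambda V_\perp|\psi'_{\mathbf Q}\rangle\big)/\big\||\psi'_{\mathbf Q}\rangle-\lambda V_\perp|\psi'_{\mathbf Q}\rangle\big\|$ and $\Delta E(\lambda)=\langle\psi'_{\mathbf Q}|H|\psi'_{\mathbf Q}\rangle-\langle\psi'_{\mathbf Q}(\lambda)|H|\psi'_{\mathbf Q}(\lambda)\rangle$. Then there exists $\lambda_{\max}>0$ such that $\Delta E(\lambda)$ is strictly positive and monotonically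 increasing for all $0<\lambda<\lambda_{\max}$.
   Context: A stabilizer group is an abelian subgroup of the $n$-qubit Pauli group $\{\pm1,\pm i\}\cdot\{\mathbb 1,X,Y,Z\}^{\otimes n}$ not containing $-\mathbb 1$; its code space is $V_{\mathbf Q}=\{|\psi\rangle: q|\psi\rangle=|\psi\rangle\ \forall q\in\mathbf Q\}$. $C(\mathbf Q)$ denotes the set of Pauli operators commuting with every element of $\mathbf Q$ (the Pauli centralizer). *)

(* Defs.v *)
From HB Require Import structures.
From mathcomp Require Import all_boot all_order all_algebra.
From mathcomp Require Import complex.
From mathcomp Require Import boolp.
Set Implicit Arguments.
Unset Strict Implicit.
Unset Printing Implicit Defensive.
Import Order.TTheory GRing.Theory Num.Theory.
Local Open Scope ring_scope.

(* The Hilbert space of n qubits is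
   C^(2^n); basis index i : 'I_(2^n), bit k of i is odd (i %/ 2^k). *)

(* single-qubit Pauli matrices, a = 0,1,2,3 <-> 1, X, Y, Z;
   entry (b,c) with b the row bit and c the column bit *)
Definition sigma (R : rcfType) (a : 'I_4) (b c : bool) : R[i] :=
  match val a with
  | 0 => (b == c)%:R
  | 1 => (b != c)%:R
  | 2 => if b == c then 0 else if b then 'i else - 'i
  | _ => if b == c then (if b then -1 else 1) else 0
  end.

Definition qbit (n : nat) (k : 'I_n) (i : 'I_(2 ^ n)) : bool := odd (i %/ 2 ^ k).

(* the Pauli operator  i^c * sigma_{p 0} (x) ... (x) sigma_{p (n-1)} *)
Definition pauli_mx (R : rcfType) (n : nat) (c : 'I_4) (p : 'I_n -> 'I_4)
  : 'M[R[i]]_(2 ^ n) :=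
  \matrix_(i, j) ('i ^+ c * \prod_(k < n) sigma R (p k) (qbit k i) (qbit k j)).

Definition is_pauli (R : rcfType) (n : nat) (M : 'M[R[i]]_(2 ^ n)) : Prop :=
  exists (c : 'I_4) (p : 'I_n -> 'I_4), M = pauli_mx R c p.

Definition adj (R : rcfType) (m k : nat) (M : 'M[R[i]]_(m, k)) : 'M[R[i]]_(k, m) :=
  (map_mx (fun x => x^*) M)^T.

Definition hermitian (R : rcfType) (m : nat) (M : 'M[R[i]]_m) : Prop := adj M = M.

Definition is_herm_pauli (R : rcfType) (n : nat) (M : 'M[R[i]]_(2 ^ n)) : Prop :=
  is_pauli M /\ hermitian M.

Definition is_stabilizer_group (R : rcfType) (n : nat)
    (Q : 'M[R[i]]_(2 ^ n) -> Prop) : Prop :=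
  (forall q, Q q -> is_pauli q) /\
  Q 1%:M /\
  (forall q1 q2, Q q1 -> Q q2 -> Q (q1 *m q2)) /\
  (forall q, Q q -> Q (invmx q)) /\
  (forall q1 q2, Q q1 -> Q q2 -> q1 *m q2 = q2 *m q1) /\
  ~ Q (- 1%:M).

Definition gen_group (R : rcfType) (n : nat) (gen : seq 'M[R[i]]_(2 ^ n))
    (M : 'M[R[i]]_(2 ^ n)) : Prop :=
  exists s : seq 'M[R[i]]_(2 ^ n),
    (forall x, x \in s -> exists2 g, g \in gen & (x = g \/ x = invmx g))
    /\ M = foldr mulmx 1%:M s.

Definition gen_independent (R : rcfType) (n : nat) (gen : seq 'M[R[i]]_(2 ^ n))
  : Prop :=
  uniq gen /\ forall g, g \in gen -> ~ gen_group (rem g gen) g.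

Definition in_centralizer (R : rcfType) (n : nat) (Q : 'M[R[i]]_(2 ^ n) -> Prop)
    (P : 'M[R[i]]_(2 ^ n)) : Prop :=
  is_pauli P /\ forall q, Q q -> P *m q = q *m P.

Definition in_code_space (R : rcfType) (n : nat) (Q : 'M[R[i]]_(2 ^ n) -> Prop)
    (psi : 'cV[R[i]]_(2 ^ n)) : Prop :=
  forall q, Q q -> q *m psi = psi.

Definition HQ (R : rcfType) (n : nat) (gen : seq 'M[R[i]]_(2 ^ n)) : 'M[R[i]]_(2 ^ n) :=
  - \sum_(g <- gen) g.

Definition Vop (R : rcfType) (n : nat) (PV : seq 'M[R[i]]_(2 ^ n))
    (w : 'M[R[i]]_(2 ^ n) -> R) : 'M[R[i]]_(2 ^ n) :=
  - \sum_(P <- PV) real_complex R (w P) *: P.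

Definition Vperp (R : rcfType) (n : nat) (Q : 'M[R[i]]_(2 ^ n) -> Prop)
    (PV : seq 'M[R[i]]_(2 ^ n)) (w : 'M[R[i]]_(2 ^ n) -> R) : 'M[R[i]]_(2 ^ n) :=
  - \sum_(P <- PV | `[< ~ in_centralizer Q P >]) real_complex R (w P) *: P.

Definition expect (R : rcfType) (m : nat) (A : 'M[R[i]]_m) (u : 'cV[R[i]]_m) : R[i] :=
  (adj u *m A *m u) ord0 ord0.

Definition vnorm (R : rcfType) (m : nat) (u : 'cV[R[i]]_m) : R[i] :=
  sqrtC ((adj u *m u) ord0 ord0).

Definition psi_lambda (R : rcfType) (m : nat) (Vp : 'M[R[i]]_m)
    (psi : 'cV[R[i]]_m) (l : R) : 'cV[R[i]]_m :=
  let phi := psi - real_complex R l *: (Vp *m psi) in (vnorm phi)^-1 *: phi.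

Definition DeltaE (R : rcfType) (m : nat) (H Vp : 'M[R[i]]_m)
    (psi : 'cV[R[i]]_m) (l : R) : R[i] :=
  expect H psi - expect H (psi_lambda Vp psi l).

Definition Delta_gap (R : rcfType) : R := 2.

(* Main.v *)
Require Import Defs.
From HB Require Import structures.
From mathcomp Require Import all_boot all_order all_algebra.
From mathcomp Require Import complex.
From mathcomp Require Import boolp.
From mathcomp Require Import ring lra.
Import Order.TTheory GRing.Theory Num.Theory.
Local Open Scope ring_scope.
Set Implicit Arguments.
Unset Strict Implicit.
Lemma sum_double (T : nmodType) (M : nat) (F : nat -> T) :
  \sum_(0 <= l < M * 2) F l = \sum_(0 <= m < M) (F (m * 2)%N + F (m * 2).+1).
Proof.
elim: M => [|M IH]; first by rewrite !big_geq.
have -> : (M.+1 * 2 = (M * 2).+2)%N by rewrite mulSn addnC addn2.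
by rewrite !big_nat_recr //= IH addrA.
Qed.

Lemma sum_prod_bits (T : comNzRingType) (n : nat) (f : 'I_n -> bool -> T) :
  \sum_(l < 2 ^ n) \prod_(k < n) f k (odd (l %/ 2 ^ k)) =
  \prod_(k < n) (f k false + f k true).
Proof.
elim: n f => [|n IH] f.
  by rewrite big_ord1 !big_ord0.
rewrite -(big_mkord xpredT (fun l => \prod_(k < n.+1) f k (odd (l %/ 2 ^ k)))).
rewrite expnSr sum_double big_ord_recl -(IH (fun k => f (lift ord0 k))).
rewrite -(big_mkord xpredT (fun l => \prod_(k < n) f (lift ord0 k) (odd (l %/ 2 ^ k)))) big_distrr /=.
apply: eq_bigr => m _.
rewrite !big_ord_recl /= !expn0 !divn1 oddM andbF.
have -> : odd (m * 2).+1 = true by rewrite -addn1 oddD oddM andbF.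
rewrite mulrDl; congr (_ * _ + _ * _); apply: eq_bigr => k _;
  rewrite /bump leq0n add1n expnS divnMA.
  by rewrite mulnK.
have -> : ((m * 2).+1 %/ 2 = m)%N by rewrite -addn1 divnMDl // addn0.
by [].
Qed.
Definition anti (a b : 'I_4) : bool :=
  ~~ [|| val a == 0%N, val b == 0%N | a == b].

Lemma sigma_comm (R : rcfType) (a b : 'I_4) (x y : bool) :
  \sum_(z : bool) sigma R a x z * sigma R b z y =
  (-1) ^+ anti a b * \sum_(z : bool) sigma R b x z * sigma R a z y.
Proof.
have ii : 'i * 'i = -1 :> R[i] by rewrite -expr2 sqrCi.
rewrite !big_bool.
case: a => [[|[|[|[|a]]]] Ha] //; case: b => [[|[|[|[|b]]]] Hb] //;
case: x; case: y; rewrite /sigma /anti /=;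
rewrite ?(mul0r, mulr0, mul1r, mulr1, add0r, addr0, mulrN, mulNr, opprK, oppr0, ii, expr0, expr1) //.

Qed.

Lemma pauli_prod_entry (R : rcfType) (n : nat) c p c' p' (i j : 'I_(2 ^ n)) :
  (pauli_mx R c p *m pauli_mx R c' p') i j =
  'i ^+ c * 'i ^+ c' * \prod_(k < n)
     (\sum_(z : bool) sigma R (p k) (qbit k i) z * sigma R (p' k) z (qbit k j)).
Proof.
rewrite !mxE.
under eq_bigr => l _ do rewrite !mxE mulrACA -big_split /=.
rewrite -big_distrr /=; congr (_ * _).
rewrite (@sum_prod_bits _ n (fun k z => sigma R (p k) (qbit k i) z * sigma R (p' k) z (qbit k j))).
by apply: eq_bigr => k _; rewrite big_bool addrC.
Qed.

Lemma pauli_comm (R : rcfType) (n : nat) (A B : 'M[R[i]]_(2 ^ n)) :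
  is_pauli A -> is_pauli B -> A *m B = B *m A \/ A *m B = - (B *m A).
Proof.
move=> [c [p ->]] [c' [p' ->]].
set S := \prod_(k < n) (-1) ^+ anti (p k) (p' k) : R[i].
have E : forall i j, (pauli_mx R c p *m pauli_mx R c' p') i j =
                     S * (pauli_mx R c' p' *m pauli_mx R c p) i j.
  move=> i j; rewrite !pauli_prod_entry.
  under eq_bigr => k _ do rewrite sigma_comm.
  by rewrite big_split /= -/S mulrCA [_ * 'i ^+ c]mulrC.
have : S = 1 \/ S = -1.
  apply: (big_ind (fun x : R[i] => x = 1 \/ x = -1)); first by left.
    move=> x y [->|->] [->|->]; rewrite ?mul1r ?mulr1; try by [left|right].
    by left; rewrite mulrNN mulr1.
  by move=> k _; case: (anti _ _); [right; rewrite expr1 | left; rewrite expr0].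
case=> HS; [left|right]; apply/matrixP => i j; rewrite E HS ?mul1r //.
by rewrite mulN1r [in RHS]mxE.
Qed.
Lemma real_part (R : rcfType) (B E G : R) : 0 < B ->
  let f := fun l : R => E - (E - 2 * l * B + l ^+ 2 * G) / (1 + l ^+ 2 * B) in
  exists lmax : R, 0 < lmax /\ (forall l, 0 < l -> l < lmax -> 0 < f l) /\
    (forall l1 l2, 0 < l1 -> l1 <= l2 -> l2 < lmax -> f l1 <= f l2).
Proof.
move=> B0 f.
set c := E * B - G.
have Np : forall l : R, 0 < 1 + l ^+ 2 * B.
  by move=> l; apply: ltr_pwDl => //; apply: mulr_ge0 => //; [exact: sqr_ge0 | exact: ltW].
have fE : forall l, f l = (2 * l * B + l ^+ 2 * c) / (1 + l ^+ 2 * B).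
  move=> l; rewrite /f /c; have := Np l; rewrite lt0r => /andP [Nn _].
  by field.
have ca : - `|c| <= c by have := ler_norm (- c); rewrite normrN; lra.
have a0 : 0 <= `|c| := normr_ge0 c.
move: ca a0; set a := `|c| => ca a0.
set K := a + B ^+ 2 + B + 1.
have K0 : 0 < K by rewrite /K; have := sqr_ge0 B; lra.
have KB : B <= K by rewrite /K; have := sqr_ge0 B; lra.
have KB2 : B ^+ 2 <= K by rewrite /K; lra.
have aK : a <= K by rewrite /K; have := sqr_ge0 B; lra.
set lmax := B / (4 * K).
have lmaxE : lmax * (4 * K) = B by rewrite /lmax mulfVK // mulf_neq0 // gt_eqF.
have lm0 : 0 < lmax by rewrite /lmax divr_gt0 // mulr_gt0.
have lm1 : lmax <= 1.
  have h : lmax * (4 * B) <= lmax * (4 * K) by apply: ler_wpM2l; [exact: ltW | lra].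
  rewrite lmaxE in h.
  have : lmax * 4 <= 1 by rewrite -(ler_pM2r B0) mul1r -mulrA.
  lra.
have cl : forall s, 0 <= s -> - (a * s) <= c * s.
  move=> s s0; have : 0 <= (c + a) * s by apply: mulr_ge0 => //; lra.
  lra.
exists lmax; split => //; split.
  move=> l l0 ll; rewrite fE; apply: divr_gt0 => //.
  have h1 := cl l (ltW l0).
  have h2 : a * l <= K * lmax by apply: ler_pM => //; exact: ltW.
  have h3 : 0 < l * (2 * B + c * l) by apply: mulr_gt0 => //; lra.
  have -> : 2 * l * B + l ^+ 2 * c = l * (2 * B + c * l) by ring.
  done.
move=> l1 l2 l10 l12 l2m.
have l20 : 0 < l2 by exact: lt_le_trans l10 l12.
have l1m : l1 < lmax by exact: le_lt_trans l12 l2m.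
have D : 0 <= 2 * B + c * (l1 + l2) - 2 * B ^+ 2 * (l1 * l2).
  have h1 := cl (l1 + l2) (ltW (addr_gt0 l10 l20)).
  have h2 : a * (l1 + l2) <= K * (lmax + lmax).
    by apply: ler_pM => //; [lra | lra].
  have h3 : l1 * l2 <= lmax * lmax by apply: ler_pM; lra.
  have h4 : B ^+ 2 * (l1 * l2) <= B ^+ 2 * (lmax * lmax).
    by rewrite ler_pM2l // exprn_gt0.
  have h5 : B ^+ 2 * (lmax * lmax) <= B ^+ 2 * lmax.
    rewrite ler_pM2l ?exprn_gt0 //.
    nra.
  have h6 : B ^+ 2 * lmax <= K * lmax by apply: ler_wpM2r => //; exact: ltW.
  have e1 : K * (lmax + lmax) = B / 2 by rewrite -[B]lmaxE; field.
  have e2 : K * lmax = B / 4 by rewrite -[B]lmaxE; field.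
  lra.
have frac : forall p1 p2 n1 n2 : R, 0 < n1 -> 0 < n2 -> p1 * n2 <= p2 * n1 ->
    p1 / n1 <= p2 / n2.
  by move=> p1 p2 n1 n2 n10 n20 h; rewrite ler_pdivrMr // mulrAC ler_pdivlMr.
rewrite !fE; apply: frac => //.
have E2 : (2 * l2 * B + l2 ^+ 2 * c) * (1 + l1 ^+ 2 * B) -
          (2 * l1 * B + l1 ^+ 2 * c) * (1 + l2 ^+ 2 * B) =
          (l2 - l1) * (2 * B + c * (l1 + l2) - 2 * B ^+ 2 * (l1 * l2)) by ring.
have : 0 <= (l2 - l1) * (2 * B + c * (l1 + l2) - 2 * B ^+ 2 * (l1 * l2)).
  by apply: mulr_ge0 => //; lra.
rewrite -E2; lra.
Qed.
Lemma adjK (R : rcfType) m k (M : 'M[R[i]]_(m, k)) : adj (adj M) = M.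
Proof. by apply/matrixP => i j; rewrite !mxE conjCK. Qed.

Lemma adj_mul (R : rcfType) m k l (A : 'M[R[i]]_(m, k)) (B : 'M[R[i]]_(k, l)) :
  adj (A *m B) = adj B *m adj A.
Proof.
apply/matrixP => i j; rewrite !mxE rmorph_sum; apply: eq_bigr => x _.
by rewrite !mxE rmorphM mulrC.
Qed.

Lemma adjD (R : rcfType) m k (A B : 'M[R[i]]_(m, k)) : adj (A + B) = adj A + adj B.
Proof. by apply/matrixP => i j; rewrite !mxE rmorphD. Qed.

Lemma adjN (R : rcfType) m k (A : 'M[R[i]]_(m, k)) : adj (- A) = - adj A.
Proof. by apply/matrixP => i j; rewrite !mxE rmorphN. Qed.

Lemma adjZ (R : rcfType) m k c (A : 'M[R[i]]_(m, k)) : adj (c *: A) = c^* *: adj A.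
Proof. by apply/matrixP => i j; rewrite !mxE rmorphM. Qed.

Lemma adj0 (R : rcfType) m k : adj (0 : 'M[R[i]]_(m, k)) = 0.
Proof. by apply/matrixP => i j; rewrite !mxE rmorph0. Qed.

Lemma conj_realC (R : rcfType) (x : R) : (real_complex R x)^* = real_complex R x.
Proof. by apply: conj_Creal; apply/complex_realP; exists x. Qed.

Lemma herm_sum (R : rcfType) m (I : Type) (r : seq I) (Pr : pred I) (F : I -> 'M[R[i]]_m) :
  (forall j, Pr j -> Defs.hermitian (F j)) -> Defs.hermitian (\sum_(j <- r | Pr j) F j).
Proof.
move=> h; apply: (big_ind (fun M : 'M[R[i]]_m => Defs.hermitian M)) => //.
- exact: adj0.
- by move=> x y hx hy; rewrite /Defs.hermitian adjD hx hy.
Qed.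

Lemma herm_opp (R : rcfType) m (A : 'M[R[i]]_m) : Defs.hermitian A -> Defs.hermitian (- A).
Proof. by rewrite /Defs.hermitian adjN => ->. Qed.

Lemma herm_add (R : rcfType) m (A B : 'M[R[i]]_m) :
  Defs.hermitian A -> Defs.hermitian B -> Defs.hermitian (A + B).
Proof. by rewrite /Defs.hermitian adjD => -> ->. Qed.

Lemma herm_scale (R : rcfType) m (x : R) (A : 'M[R[i]]_m) :
  Defs.hermitian A -> Defs.hermitian (real_complex R x *: A).
Proof. by rewrite /Defs.hermitian adjZ conj_realC => ->. Qed.

Definition ip (R : rcfType) m (x y : 'cV[R[i]]_m) : R[i] := (adj x *m y) ord0 ord0.
Arguments ip {R m}.

Lemma ip_mulr (R : rcfType) m (A : 'M[R[i]]_m) (x y : 'cV[R[i]]_m) :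
  ip x (A *m y) = ip (adj A *m x) y.
Proof. by rewrite /ip adj_mul adjK mulmxA. Qed.

Lemma ip_herm (R : rcfType) m (A : 'M[R[i]]_m) (x y : 'cV[R[i]]_m) :
  Defs.hermitian A -> ip x (A *m y) = ip (A *m x) y.
Proof. by move=> hA; rewrite ip_mulr hA. Qed.

Lemma ipDr (R : rcfType) m (x y z : 'cV[R[i]]_m) : ip x (y + z) = ip x y + ip x z.
Proof. by rewrite /ip mulmxDr mxE. Qed.

Lemma ipNr (R : rcfType) m (x y : 'cV[R[i]]_m) : ip x (- y) = - ip x y.
Proof. by rewrite /ip mulmxN mxE. Qed.

Lemma ipZr (R : rcfType) m c (x y : 'cV[R[i]]_m) : ip x (c *: y) = c * ip x y.
Proof. by rewrite /ip -scalemxAr mxE. Qed.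

Lemma ip_conj (R : rcfType) m (x y : 'cV[R[i]]_m) : (ip x y)^* = ip y x.
Proof.
rewrite /ip; have := congr1 (fun M : 'M[R[i]]_1 => M ord0 ord0) (@adj_mul R 1 m 1 (adj x) y).
rewrite adjK /= => <-; by rewrite /adj !mxE.
Qed.

Lemma ipDl (R : rcfType) m (x y z : 'cV[R[i]]_m) : ip (x + y) z = ip x z + ip y z.
Proof. by rewrite /ip adjD mulmxDl mxE. Qed.

Lemma ipNl (R : rcfType) m (x y : 'cV[R[i]]_m) : ip (- x) y = - ip x y.
Proof. by rewrite /ip adjN mulNmx mxE. Qed.

Lemma ipZl (R : rcfType) m c (x y : 'cV[R[i]]_m) : ip (c *: x) y = c^* * ip x y.
Proof. by rewrite /ip adjZ -scalemxAl mxE. Qed.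

Lemma ip_sumr (R : rcfType) m (I : Type) (r : seq I) (Pr : pred I)
   (F : I -> 'cV[R[i]]_m) x :
  ip x (\sum_(j <- r | Pr j) F j) = \sum_(j <- r | Pr j) ip x (F j).
Proof.
apply: (big_rec2 (fun a b => ip x b = a)); first by rewrite /ip mulmx0 mxE.
by move=> i a b _ <-; rewrite ipDr.
Qed.

Lemma ip_ge0 (R : rcfType) m (x : 'cV[R[i]]_m) : 0 <= ip x x.
Proof.
rewrite /ip mxE; apply: sumr_ge0 => k _; rewrite !mxE mulrC.
exact: mul_conjC_ge0.
Qed.

Lemma expectE (R : rcfType) m (A : 'M[R[i]]_m) x : expect A x = ip x (A *m x).
Proof. by rewrite /expect /ip mulmxA. Qed.

Lemma gen_in (R : rcfType) n (gen : seq 'M[R[i]]_(2 ^ n)) g :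
  g \in gen -> gen_group gen g.
Proof.
move=> hg; exists [:: g]; split; last by rewrite /= mulmx1.
by move=> x; rewrite inE => /eqP ->; exists g => //; left.
Qed.

Lemma comm_inv (R : rcfType) m (P g : 'M[R[i]]_m) :
  P *m g = g *m P -> P *m invmx g = invmx g *m P.
Proof.
case: (boolP (g \in unitmx)) => u h; last by rewrite invmx_out.
rewrite -[LHS](mulKmx u) -[RHS](mulKmx u); congr (_ *m _).
by rewrite mulmxA -h -mulmxA mulmxV // mulmx1 mulKVmx.
Qed.

Lemma comm_group (R : rcfType) n (gen : seq 'M[R[i]]_(2 ^ n)) P :
  (forall g, g \in gen -> P *m g = g *m P) ->
  forall q, gen_group gen q -> P *m q = q *m P.
Proof.
move=> h q [s [Hs ->]]; elim: s Hs => [|x s IH] Hs /=.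
  by rewrite mulmx1 mul1mx.
have hx : P *m x = x *m P.
  have [g hg [->|->]] := Hs x (mem_head x s); first exact: h.
  exact/comm_inv/h.
rewrite mulmxA hx -!mulmxA IH //.
by move=> y hy; apply: Hs; rewrite inE hy orbT.
Qed.

Lemma two_eq0 (R : rcfType) (x : R[i]) : x = - x -> x = 0.
Proof.
move=> h; have : x *+ 2 = 0 by rewrite mulr2n {1}h addNr.
by move/eqP; rewrite mulrn_eq0 /= => /eqP.
Qed.

Lemma Kzero (R : rcfType) n (gen : seq 'M[R[i]]_(2 ^ n)) P chi phi :
  (forall g, g \in gen -> is_herm_pauli g) -> is_pauli P ->
  ~ in_centralizer (gen_group gen) P ->
  in_code_space (gen_group gen) chi -> in_code_space (gen_group gen) phi ->
  ip chi (P *m phi) = 0.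
Proof.
move=> hgen hP hnc hchi hphi.
case: (pselect (exists2 g, g \in gen & P *m g != g *m P)) => [[g hg hne]|hno];
  last first.
  exfalso; apply: hnc; split => //; apply: comm_group => g hg.
  by case: (eqVneq (P *m g) (g *m P)) => // hne; exfalso; apply: hno; exists g.
have [hgp hgh] := hgen g hg.
have [hc|ha] := pauli_comm hP hgp; first by rewrite hc eqxx in hne.
apply: two_eq0.
rewrite -{1}(hphi g (gen_in hg)) mulmxA ha mulNmx ipNr -mulmxA (ip_mulr g) hgh.
by rewrite (hchi g (gen_in hg)).
Qed.

Lemma realC_ex (R : rcfType) (x : R[i]) : x^* = x -> exists k : R, x = real_complex R k.
Proof. by move=> h; apply/complex_realP; apply/CrealP. Qed.

Lemma core (R : rcfType) m (H Vp : 'M[R[i]]_m) (psi : 'cV[R[i]]_m) :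
  Defs.hermitian H -> Defs.hermitian Vp -> ip psi psi = 1 ->
  ip psi (Vp *m psi) = 0 ->
  ip psi (H *m (Vp *m psi)) = ip (Vp *m psi) (Vp *m psi) ->
  ip (Vp *m psi) (Vp *m psi) != 0 ->
  exists lmax : R, 0 < lmax /\
      (forall l : R, 0 < l -> l < lmax -> 0 < DeltaE H Vp psi l) /\
      (forall l1 l2 : R, 0 < l1 -> l1 <= l2 -> l2 < lmax ->
         DeltaE H Vp psi l1 <= DeltaE H Vp psi l2).
Proof.
move=> hH hV hpsi hu0 hHu hnz.
set u := Vp *m psi in hu0 hHu hnz *.
have [B hB] : exists B : R, ip u u = real_complex R B by apply: realC_ex; rewrite ip_conj.
have [E hE] : exists E : R, ip psi (H *m psi) = real_complex R E.
  by apply: realC_ex; rewrite ip_conj -ip_herm.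
have [G hG] : exists G : R, ip u (H *m u) = real_complex R G.
  by apply: realC_ex; rewrite ip_conj -ip_herm.
have B0 : 0 < B.
  have : 0 < ip u u by rewrite lt0r hnz ip_ge0.
  by rewrite hB -(rmorph0 (real_complex R)) ltcR.
have DE : forall l, DeltaE H Vp psi l = real_complex R
   (E - (E - 2 * l * B + l ^+ 2 * G) / (1 + l ^+ 2 * B)).
  move=> l; rewrite /DeltaE /psi_lambda /vnorm /= !expectE.
  set lc := real_complex R l.
  set phi := psi - lc *: u.
  have lcc : lc^* = lc by exact: conj_realC.
  have up : ip u psi = 0 by rewrite -ip_conj hu0 rmorph0.
  have Hup : ip u (H *m psi) = real_complex R B.
    by rewrite ip_herm // -ip_conj hHu hB conj_realC.
  have Nphi : ip phi phi = real_complex R (1 + l ^+ 2 * B).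
    rewrite /phi ipDl ipNl ipZl !ipDr !ipNr !ipZr hpsi hu0 up hB lcc.
    rewrite rmorphD rmorph1 rmorphM expr2 rmorphM -/lc; ring.
  have Hphi : ip phi (H *m phi) = real_complex R (E - 2 * l * B + l ^+ 2 * G).
    rewrite /phi mulmxDr mulmxN -scalemxAr.
    rewrite ipDl ipNl ipZl !ipDr !ipNr !ipZr hE hHu hB Hup hG lcc.
    rewrite rmorphD rmorphB !rmorphM rmorph_nat -/lc; ring.
  rewrite -/(ip phi phi) Nphi hE.
  set N := real_complex R (1 + l ^+ 2 * B).
  have N0 : 0 <= N.
    rewrite /N -(rmorph0 (real_complex R)) lecR.
    by apply: addr_ge0 => //; apply: mulr_ge0; [exact: sqr_ge0 | exact: ltW].
  set c := (sqrtC N)^-1.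
  have cc : c^* = c by apply: geC0_conj; rewrite invr_ge0 sqrtC_ge0.
  have c2 : c * c = N^-1 by rewrite -expr2 exprVn sqrtCK.
  rewrite -scalemxAr ipZr ipZl cc mulrA c2 Hphi.
  by rewrite /N rmorphB (rmorphM _ (E - 2 * l * B + l ^+ 2 * G)) fmorphV mulrC.
have [lmax [lm0 [hpos hmono]]] := @real_part R B E G B0.
exists lmax; split; first exact: lm0.
split.
  move=> l l0 ll; rewrite DE -(rmorph0 (real_complex R)) ltcR.
  exact: hpos.
move=> l1 l2 h1 h2 h3; rewrite !DE lecR.
exact: hmono.
Qed.

Lemma code_mul (R : rcfType) n (Q : 'M[R[i]]_(2 ^ n) -> Prop) (A : 'M[R[i]]_(2 ^ n)) psi :
  (forall q, Q q -> q *m A = A *m q) -> in_code_space Q psi ->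
  in_code_space Q (A *m psi).
Proof. by move=> hA hpsi q hq; rewrite mulmxA hA // -mulmxA hpsi. Qed.

Lemma comm_sum (R : rcfType) m (q : 'M[R[i]]_m) (I : Type) (r : seq I) (Pr : pred I)
   (F : I -> 'M[R[i]]_m) :
  (forall j, Pr j -> q *m F j = F j *m q) ->
  q *m (\sum_(j <- r | Pr j) F j) = (\sum_(j <- r | Pr j) F j) *m q.
Proof.
move=> h; rewrite mulmx_sumr mulmx_suml; exact: eq_bigr.
Qed.

Lemma Vperp_ortho (R : rcfType) n (gen PV : seq 'M[R[i]]_(2 ^ n)) (w : 'M[R[i]]_(2 ^ n) -> R)
   chi psi :
  (forall g, g \in gen -> is_herm_pauli g) ->
  (forall P, P \in PV -> is_herm_pauli P) ->
  in_code_space (gen_group gen) chi -> in_code_space (gen_group gen) psi ->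
  ip chi (Vperp (gen_group gen) PV w *m psi) = 0.
Proof.
move=> hgen hPV hchi hpsi.
rewrite /Vperp mulNmx mulmx_suml ipNr ip_sumr big_seq_cond big1 ?oppr0 //.
move=> P /andP [hP /asboolP hnc].
rewrite -scalemxAl ipZr (Kzero hgen _ hnc hchi hpsi) ?mulr0 //.
by case: (hPV P hP).
Qed.

Unset Implicit Arguments.
Unset Strict Implicit.

Theorem lemma4 (R : rcfType) (n : nat)
  (gen : seq 'M[R[i]]_(2 ^ n)) (PV : seq 'M[R[i]]_(2 ^ n))
  (w : 'M[R[i]]_(2 ^ n) -> R) :
  is_stabilizer_group (gen_group gen) ->
  (forall g, g \in gen -> is_herm_pauli g) ->
  gen_independent gen ->
  uniq PV ->
  (forall P, P \in PV -> is_herm_pauli P) ->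
  (forall P, P \in PV -> 0 < w P) ->
  Vperp (gen_group gen) PV w != 0 ->
  \sum_(P <- PV | `[< ~ gen_group gen P >]) w P
    < Delta_gap R - 2 * \sum_(P <- PV | `[< gen_group gen P >]) w P ->
  forall psi : 'cV[R[i]]_(2 ^ n),
    in_code_space (gen_group gen) psi ->
    expect 1%:M psi = 1 ->
    expect (Vperp (gen_group gen) PV w *m Vperp (gen_group gen) PV w) psi != 0 ->
    exists lmax : R, 0 < lmax /\
      (forall l : R, 0 < l -> l < lmax ->
         0 < DeltaE (HQ gen + Vop PV w) (Vperp (gen_group gen) PV w) psi l) /\
      (forall l1 l2 : R, 0 < l1 -> l1 <= l2 -> l2 < lmax ->
         DeltaE (HQ gen + Vop PV w) (Vperp (gen_group gen) PV w) psi l1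
         <= DeltaE (HQ gen + Vop PV w) (Vperp (gen_group gen) PV w) psi l2).
Proof.
move=> hstab hgen _ _ hPV hw _ _ psi hcode hnorm hVV.
have [_ [_ [_ [_ [hab _]]]]] := hstab.
set Q := gen_group gen.
set Vp := Vperp Q PV w.
set Vpar := - \sum_(P <- PV | `[< in_centralizer Q P >]) real_complex R (w P) *: P.
have VE : Vop PV w = Vpar + Vp.
  rewrite /Vop /Vpar /Vp /Vperp (bigID (fun P => `[< in_centralizer Q P >])) /=.
  rewrite opprD; congr (_ + - _); apply: eq_bigl => P; by rewrite asbool_neg.
have hHQ : Defs.hermitian (HQ gen).
  apply: herm_opp; rewrite big_seq; apply: herm_sum => g hg.
  by case: (hgen g hg).
have hVp : Defs.hermitian Vp.
  rewrite /Vp /Vperp; apply: herm_opp; rewrite big_seq_cond; apply: herm_sum.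
  move=> P /andP [hP _]; apply: herm_scale; by case: (hPV P hP).
have hVpar : Defs.hermitian Vpar.
  rewrite /Vpar; apply: herm_opp; rewrite big_seq_cond; apply: herm_sum.
  move=> P /andP [hP _]; apply: herm_scale; by case: (hPV P hP).
have hH : Defs.hermitian (HQ gen + Vop PV w).
  by rewrite VE; apply: herm_add => //; apply: herm_add.
have hA : in_code_space Q ((HQ gen + Vpar) *m psi).
  apply: code_mul hcode => q hq.
  rewrite mulmxDr mulmxDl /HQ /Vpar !mulmxN !mulNmx; congr (- _ + - _).
    rewrite big_seq; apply: comm_sum => g hg.
    exact: hab q g hq (gen_in hg).
  apply: comm_sum => P /asboolP [_ hP].
  by rewrite -scalemxAr -scalemxAl hP.
apply: core.
- exact: hH.
- exact: hVp.
- by move: hnorm; rewrite expectE mul1mx.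
- exact: Vperp_ortho.
- rewrite ip_herm // VE addrA mulmxDl ipDl.
  by rewrite (Vperp_ortho w hgen hPV hA hcode) add0r.
- by move: hVV; rewrite expectE -mulmxA ip_herm.
Qed.
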